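(* Let $n \geq 2$ and $\theta = (\theta_1,\dots,\theta_n) \in \mathbb{T}^n$, and let $r(\theta) = \frac{1}{n}\left|\sum_{j=1}^n e^{\mathrm{i}\theta_j}\right|$ be the magnitude of the order parameter. Then: 1) if $\theta \in \bar\Delta(\gamma)$ for some $\gamma \in [0,\pi]$, then $r(\theta) \in [\cos(\gamma/2), 1]$; 2) if $r(\theta) \in [0,1]$ and $\theta \in \bar\Delta(\pi)$, then $\theta \in \bar\Delta(\gamma)$ for some $\gamma \in [2\arccos(r(\theta)), \pi]$.
   Context: $\mathbb{T}^1 = ]-\pi,\pi]$ with $-\pi$ and $\pi$ identified (the circle), and $\mathbb{T}^n$ its $n$-fold product. For $\theta_1,\theta_2 \in \mathbb{T}^1$, $|\theta_1-\theta_2|$ denotes the geodesic distance on the circle. For $\gamma \in [0,\pi]$, $\Delta(\gamma) \subset \mathbb{T}^n$ is the set of $(\theta_1,\dots,\theta_n)$ for which there exists an arc of length $\gamma$ containing all $\theta_i$ in its interior, and $\bar\Delta(\gamma)$ is the union of the phase-synchronized set $\{\theta : \theta_i=\theta_j \text{ for all } i,j\}$ and the closure of $\Delta(\gamma)$; thus $\theta\in\bar\Delta(\gamma)$ means $\max_{i,j}|\theta_i-\theta_j| \le \gamma$. *)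

(* Defs.v *)
From Stdlib Require Import Reals Lra.
Open Scope R_scope.

(* A point of T^n is represented by theta : nat -> R, with coordinates
   theta 0, ..., theta (n-1), each in the fundamental domain ]-PI, PI]. *)
Definition in_torus (n : nat) (theta : nat -> R) : Prop :=
  forall i : nat, (i < n)%nat -> - PI < theta i <= PI.

(* Geodesic distance on the circle, for representatives in ]-PI, PI]. *)
Definition circ_dist (a b : R) : R :=
  Rmin (Rabs (a - b)) (2 * PI - Rabs (a - b)).

Definition order_param (n : nat) (theta : nat -> R) : R :=
  / INR n * sqrt ((sum_f_R0 (fun j => cos (theta j)) (pred n)) ^ 2
                  + (sum_f_R0 (fun j => sin (theta j)) (pred n)) ^ 2).

(* bar Delta(gamma) = sync set  U  closure of Delta(gamma), for gamma in [0,PI]: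
   all theta_i lie in some closed arc of length gamma, i.e. within geodesic
   distance gamma/2 of a common center c. *)
Definition barDelta (n : nat) (gamma : R) (theta : nat -> R) : Prop :=
  exists c : R, - PI < c <= PI /\
    forall i : nat, (i < n)%nat -> circ_dist (theta i) c <= gamma / 2.

(* Main.v *)
Require Import Defs.
From Stdlib Require Import Reals Lra Lia.
Open Scope R_scope.

Lemma norm_bound (f : nat -> R) (m : nat) :
  sqrt ((sum_f_R0 (fun j => cos (f j)) m) ^ 2 + (sum_f_R0 (fun j => sin (f j)) m) ^ 2)
  <= INR m + 1.
Proof.
  induction m as [|m IH].
  - simpl. replace (cos (f 0%nat) * (cos (f 0%nat) * 1) + sin (f 0%nat) * (sin (f 0%nat) * 1)) with 1.
    + rewrite sqrt_1; lra.
    + pose proof (sin2_cos2 (f 0%nat)); unfold Rsqr in *; lra.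
  - rewrite !tech5.
    set (A := sum_f_R0 (fun j => cos (f j)) m) in *.
    set (B := sum_f_R0 (fun j => sin (f j)) m) in *.
    set (c := cos (f (S m))). set (s := sin (f (S m))).
    set (Nn := sqrt (A ^ 2 + B ^ 2)) in *.
    assert (HS0 : 0 <= Nn) by apply sqrt_pos.
    assert (HS2 : Nn * Nn = A ^ 2 + B ^ 2).
    { apply sqrt_sqrt. nra. }
    assert (Hcs : c * c + s * s = 1).
    { pose proof (sin2_cos2 (f (S m))); unfold Rsqr in *; unfold c, s; lra. }
    assert (Hcau : A * c + B * s <= Nn).
    { pose proof (sqrt_cauchy A B c s) as H. unfold Rsqr in H.
      rewrite Hcs, sqrt_1 in H. unfold Nn. replace (A^2+B^2) with (A*A+B*B) by ring. lra. }
    rewrite S_INR.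
    apply Rle_trans with (Nn + 1); [|lra].
    rewrite <- (sqrt_Rsqr (Nn + 1)) by lra.
    apply sqrt_le_1_alt. unfold Rsqr. nra.
Qed.

Lemma sum_ge (f : nat -> R) (k : R) (m : nat) :
  (forall j, (j <= m)%nat -> k <= f j) -> (INR m + 1) * k <= sum_f_R0 f m.
Proof.
  induction m as [|m IH]; intros H.
  - simpl. specialize (H 0%nat (le_n _)). lra.
  - rewrite tech5, S_INR.
    assert (H1 := IH (fun j Hj => H j (Nat.le_le_succ_r _ _ Hj))).
    specialize (H (S m) (le_n _)). lra.
Qed.

Lemma cos_dist (a c g : R) :
  - PI < a <= PI -> - PI < c <= PI -> 0 <= g <= PI ->
  circ_dist a c <= g / 2 -> cos (g / 2) <= cos (a - c).
Proof.
  intros Ha Hc Hg Hd. unfold circ_dist in Hd.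
  assert (Hx : cos (a - c) = cos (Rabs (a - c))).
  { unfold Rabs; destruct (Rcase_abs (a - c)); [rewrite cos_neg|]; reflexivity. }
  assert (Hb : Rabs (a - c) < 2 * PI) by (unfold Rabs; destruct (Rcase_abs (a - c)); lra).
  pose proof (Rabs_pos (a - c)).
  rewrite Hx. unfold Rmin in Hd. destruct (Rle_dec (Rabs (a - c)) (2 * PI - Rabs (a - c))).
  - destruct (Req_dec (Rabs (a - c)) (g/2)) as [E|E]; [rewrite E; lra|].
    left. apply cos_decreasing_1; lra.
  - assert (E : cos (Rabs (a - c)) = cos (2 * PI - Rabs (a - c))).
    { rewrite cos_minus, cos_2PI, sin_2PI. ring. }
    rewrite E.
    destruct (Req_dec (2 * PI - Rabs (a - c)) (g/2)) as [E2|E2]; [rewrite E2; lra|].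
    left. apply cos_decreasing_1; lra.
Qed.

Theorem lemma2p1 (n : nat) (theta : nat -> R) :
  (2 <= n)%nat -> in_torus n theta ->
  (forall gamma : R, 0 <= gamma <= PI -> barDelta n gamma theta ->
     cos (gamma / 2) <= order_param n theta <= 1) /\
  (0 <= order_param n theta <= 1 -> barDelta n PI theta ->
     exists gamma : R, 2 * acos (order_param n theta) <= gamma <= PI /\
                       barDelta n gamma theta).
Proof.
  intros Hn Ht. split.
  - intros g Hg [c [Hc Hd]].
    assert (HnR : INR (pred n) + 1 = INR n).
    { rewrite <- S_INR. f_equal. lia. }
    assert (Hpos : 0 < INR n) by (apply lt_0_INR; lia).
    unfold order_param.
    set (A := sum_f_R0 (fun j => cos (theta j)) (pred n)).
    set (B := sum_f_R0 (fun j => sin (theta j)) (pred n)).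
    set (Nn := sqrt (A ^ 2 + B ^ 2)).
    assert (Hup : Nn <= INR n) by (unfold Nn, A, B; rewrite <- HnR; apply norm_bound).
    assert (Hlow : INR n * cos (g / 2) <= Nn).
    { assert (H1 : INR n * cos (g/2) <= sum_f_R0 (fun j => cos (theta j - c)) (pred n)).
      { rewrite <- HnR. apply sum_ge. intros j Hj. apply cos_dist; auto.
        apply Ht; lia. apply Hd; lia. }
      assert (H2 : sum_f_R0 (fun j => cos (theta j - c)) (pred n) = A * cos c + B * sin c).
      { unfold A, B. rewrite (Rmult_comm (sum_f_R0 _ _) (cos c)), (Rmult_comm (sum_f_R0 _ _) (sin c)), !scal_sum, <- sum_plus. apply sum_eq. intros. apply cos_minus. }
      pose proof (sqrt_cauchy A B (cos c) (sin c)) as H3.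
      assert (Hcs : (cos c)² + (sin c)² = 1) by (rewrite Rplus_comm; apply sin2_cos2).
      rewrite Hcs, sqrt_1 in H3. unfold Rsqr in H3.
      replace (A*A+B*B) with (A^2+B^2) in H3 by ring. fold Nn in H3. lra. }
    split.
    + apply Rmult_le_reg_l with (INR n); auto; rewrite <- Rmult_assoc, (Rinv_r (INR n)) by lra; lra.
    + apply Rmult_le_reg_l with (INR n); auto; rewrite <- Rmult_assoc, (Rinv_r (INR n)) by lra; lra.
  - intros Hr Hb. exists PI. split; [split; [|lra]|exact Hb].
    set (r := order_param n theta) in *.
    pose proof (acos_bound r).
    destruct (Rle_dec (acos r) (PI/2)); [lra|].
    exfalso.
    assert (cos (acos r) < cos (PI/2)) by (apply cos_decreasing_1; lra).
    rewrite cos_acos in H0 by lra. rewrite cos_PI2 in H0. lra.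
Qed.
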